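(* Let $X$ be a finite group with $|X|=n$ and let $S\subseteq X$ be a generating set with $|S|=d$ and $S^{-1}=S$. Let $G$ be the Cayley graph $(X,S)$, and suppose $G$ is not bipartite. Then $$h_{out}(G)\leq 200\,\beta_{out}(G).$$
   Context: The Cayley graph $(X,S)$ has vertex set $X$ and edges $g\sim gs$ for all $g\in X$, $s\in S$. For a vertex set $A$, $\partial_{out}(A)$ is the set of vertices not in $A$ having a neighbor in $A$, and $I(A)$ is the number of vertices of $A$ having a neighbor in $A$. The vertex expansion is $h_{out}(G)=\min\{|\partial_{out}(A)|/|A| : A\subseteq X,\ 0<|A|\le n/2\}$. For disjoint $L,R\subseteq X$ with $L\cup R\ne\emptyset$, $b_{out}(L,R)=\dfrac{I(L)+I(R)+|\partial_{out}(L\cup R)|}{|L\cup R|}$, and $\beta_{out}(G)=\min_{L,R}b_{out}(L,R)$ over all such pairs. *)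

(* Defs.v *)
From mathcomp Require Import all_boot all_order all_algebra all_fingroup.
Set Implicit Arguments. Unset Strict Implicit. Unset Printing Implicit Defensive.
Import Order.TTheory GRing.Theory Num.Theory.

Definition cay_adj (gT : finGroupType) (S : {set gT}) (x y : gT) : bool :=
  [exists s in S, y == (x * s)%g].

Definition cayley_bipartite (gT : finGroupType) (S : {set gT}) : Prop :=
  exists f : gT -> bool, forall x s, s \in S -> f x != f (x * s)%g.

Definition dout (gT : finGroupType) (S : {set gT}) (A : {set gT}) : {set gT} :=
  [set x | (x \notin A) && [exists y in A, cay_adj S x y]].

Definition Iin (gT : finGroupType) (S : {set gT}) (A : {set gT}) : nat :=
  #|[set x in A | [exists y in A, cay_adj S x y]]|.

Local Open Scope ring_scope.

(* The neutral element
   n%:R of the iterated min is >= every candidate value (|dout A| <= n,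
   |A| >= 1), so it does not affect the minimum when the index is nonempty. *)
Definition h_out (gT : finGroupType) (S : {set gT}) : rat :=
  \big[Num.min/(#|gT|%:R : rat)]_(A : {set gT} | (A != set0) && (2 * #|A| <= #|gT|)%N)
     ((#|dout S A|)%:R / (#|A|)%:R).

Definition b_out (gT : finGroupType) (S : {set gT}) (L R : {set gT}) : rat :=
  ((Iin S L + Iin S R + #|dout S (L :|: R)|)%N)%:R / (#|L :|: R|)%:R.

(* beta_out(G) = min over disjoint L, R with L u R nonempty; again n%:R
   bounds every candidate from above. *)
Definition beta_out (gT : finGroupType) (S : {set gT}) : rat :=
  \big[Num.min/(#|gT|%:R : rat)]_(LR : {set gT} * {set gT} |
        [disjoint LR.1 & LR.2] && (LR.1 :|: LR.2 != set0))
     b_out S LR.1 LR.2.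

(* Main.v *)
Require Import Defs.
From mathcomp Require Import all_boot all_order all_algebra all_fingroup.
From mathcomp Require Import zify.
Set Implicit Arguments. Unset Strict Implicit. Unset Printing Implicit Defensive.
Import Order.TTheory GRing.Theory Num.Theory.

Local Open Scope group_scope.

Definition Uset (gT : finGroupType) (L R : {set gT}) := L :|: R.

Section Core.
Variables (gT : finGroupType) (S L R U : {set gT}).
Hypothesis defU : U = L :|: R.
Hypothesis symS : S^-1 = S.
Hypothesis dLR : [disjoint L & R].

Let n := #|gT|.
Let m := #|U|.
Let IL := [set x in L | [exists y in L, cay_adj S x y]].
Let IR := [set x in R | [exists y in R, cay_adj S x y]].
Let E := (#|IL| + #|IR| + #|dout S U|)%N.
Let B := IL :|: IR :|: dout S U.

Definition ltr (g : gT) (A : {set gT}) := [set x | g^-1 * x \in A].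
Definition rtr (g : gT) (A : {set gT}) := [set x | x * g \in A].

Lemma ltrE g (A : {set gT}) z : (z \in ltr g A) = (g^-1 * z \in A).
Proof. by rewrite inE. Qed.

Lemma rtrE g (A : {set gT}) z : (z \in rtr g A) = (z * g \in A).
Proof. by rewrite inE. Qed.

Lemma card_ltr g (A : {set gT}) : #|ltr g A| = #|A|.
Proof.
have -> : ltr g A = (mulg g^-1) @^-1: A by apply/setP=> x; rewrite !inE.
apply: card_preimset; exact: mulgI.
Qed.

Lemma card_rtr g (A : {set gT}) : #|rtr g A| = #|A|.
Proof.
have -> : rtr g A = (mulg^~ g) @^-1: A by apply/setP=> x; rewrite !inE.
apply: card_preimset; exact: mulIg.
Qed.

Lemma doutP (A : {set gT}) z : reflect (z \notin A /\ exists2 s, s \in S & z * s \in A)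
  (z \in dout S A).
Proof.
rewrite /dout inE; apply: (iffP andP) => [[zA /existsP[y /andP[yA /existsP[s /andP[sS /eqP ys]]]]]|[zA [s sS zsA]]].
  by split=> //; exists s; rewrite // -ys.
split=> //; apply/existsP; exists (z * s); rewrite zsA /=.
by apply/existsP; exists s; rewrite sS eqxx.
Qed.

Lemma ILP (A : {set gT}) x : x \in [set x in A | [exists y in A, cay_adj S x y]] ->
  x \in A /\ exists2 s, s \in S & x * s \in A.
Proof.
rewrite inE => /andP[xA /existsP[y /andP[yA /existsP[s /andP[sS /eqP ys]]]]].
by split=> //; exists s; rewrite // -ys.
Qed.

Lemma ILI (A : {set gT}) x s : x \in A -> s \in S -> x * s \in A ->
  x \in [set x in A | [exists y in A, cay_adj S x y]].
Proof.
move=> xA sS xsA; rewrite inE xA /=; apply/existsP; exists (x * s).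
by rewrite xsA /=; apply/existsP; exists s; rewrite sS eqxx.
Qed.

Lemma card_B : (#|B| <= E)%N.
Proof.
rewrite /B /E; apply: (leq_trans (leq_card_setU _ _)).
by rewrite leq_add2r leq_card_setU.
Qed.

Lemma dout_subC (A : {set gT}) : dout S A \subset ~: A.
Proof. by apply/subsetP=> z /doutP[zA _]; rewrite inE. Qed.

Lemma dout_I (A A' : {set gT}) : dout S (A :&: A') \subset dout S A :|: dout S A'.
Proof.
apply/subsetP=> z /doutP[zA [s sS]]; rewrite inE => /andP[zsA zsA'].
rewrite inE; move: zA; rewrite inE negb_and => /orP[zA|zA].
  by apply/orP; left; apply/doutP; split=> //; exists s.
by apply/orP; right; apply/doutP; split=> //; exists s.
Qed.

Lemma dout_ltr g (A : {set gT}) : dout S (ltr g A) = ltr g (dout S A).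
Proof.
apply/setP=> z; apply/doutP/idP => [[zA [s sS zsA]]|].
  rewrite inE; apply/doutP; split; first by move: zA; rewrite inE.
  by exists s; move: zsA; rewrite // inE -mulgA.
rewrite inE => /doutP[zA [s sS zsA]]; split; first by rewrite inE.
by exists s; rewrite // inE mulgA.
Qed.


Lemma UE x : (x \in U) = (x \in L) || (x \in R).
Proof. by rewrite defU inE. Qed.

Lemma UnL x : x \in U -> x \notin L -> x \in R.
Proof. by rewrite UE => /orP[->|]. Qed.

Lemma RnL x : x \in R -> x \notin L.
Proof. by move=> xR; apply/negP=> xL; move/pred0P: dLR => /(_ x) /=; rewrite xL xR. Qed.

Lemma sameB y s : y \in U -> s \in S -> y * s \in U -> (y \in L) = (y * s \in L) -> y \in B.
Proof.
move=> yU sS ysU eL; rewrite /B !in_setU; case yL: (y \in L).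
  by rewrite (ILI yL sS) // -eL.
have yR := UnL yU (negbT yL).
have ysR : y * s \in R by apply: UnL => //; rewrite -eL yL.
by rewrite (ILI yR sS ysR) orbT.
Qed.

Lemma doutU_B z : z \in dout S U -> z \in B.
Proof. by rewrite /B !in_setU => ->; rewrite !orbT. Qed.

Definition T g e := [set x | (x \in U) && (g^-1 * x \in U) &&
   (((x \in L) == (g^-1 * x \in L)) == e)].

Lemma dout_T g e : dout S (T g e) \subset B :|: ltr g B.
Proof.
apply/subsetP=> z /doutP[zT [s sS]].
rewrite inE => /andP[/andP[xU gxU] ex].
case zU: (z \in U); last first.
  by rewrite in_setU doutU_B //; apply/doutP; rewrite zU; split=> //; exists s.
case gzU: (g^-1 * z \in U); last first.
  rewrite in_setU ltrE (@doutU_B (g^-1 * z)) ?orbT //; apply/doutP; rewrite gzU; split=> //.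
  by exists s; rewrite // -mulgA.
move: zT; rewrite inE zU gzU /= => ez.
have : ((z \in L) == (z * s \in L)) || ((g^-1 * z \in L) == (g^-1 * z * s \in L)).
  move: ex ez; rewrite -mulgA.
  by case: (z \in L); case: (z * s \in L); case: (g^-1 * z \in L);
     case: (g^-1 * (z * s) \in L); case: e.
case/orP=> /eqP h.
  by rewrite in_setU (sameB zU sS xU h).
by rewrite in_setU ltrE (sameB gzU sS _ h) ?orbT // -mulgA.
Qed.

Lemma card_dout_T g e : (#|dout S (T g e)| <= 2 * E)%N.
Proof.
apply: (leq_trans (subset_leq_card (dout_T g e))).
apply: (leq_trans (leq_card_setU _ _)); rewrite card_ltr.
by have := card_B; lia.
Qed.


Lemma T_subU g e : T g e \subset U.
Proof. by apply/subsetP=> x; rewrite inE => /andP[/andP[]]. Qed.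

Lemma T_subgU g e : T g e \subset ltr g U.
Proof. by apply/subsetP=> x; rewrite inE ltrE => /andP[/andP[]]. Qed.

Lemma T_part g e : (#|T g e| + #|T g (~~ e)| = #|U :&: ltr g U|)%N.
Proof.
rewrite -cardsUI.
have -> : T g e :&: T g (~~ e) = set0.
  apply/setP=> x; rewrite !inE.
  by case: (x \in U); case: (x \in L); case: (g^-1 * x \in L); case: (g^-1 * x \in U); case: e.
have -> : T g e :|: T g (~~ e) = U :&: ltr g U.
  apply/setP=> x; rewrite !inE.
  by case: (x \in U); case: (x \in L); case: (g^-1 * x \in L); case: (g^-1 * x \in U); case: e.
by rewrite cards0 addn0.
Qed.

Lemma UgU g : (2 * m <= n + #|U :&: ltr g U|)%N.
Proof.
have := cardsUI U (ltr g U); rewrite card_ltr -/m.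
have := max_card (U :|: ltr g U); rewrite -/n; lia.
Qed.

Lemma m_le_n : (m <= n)%N.
Proof. exact: max_card. Qed.

Lemma T1 : T 1 true = U.
Proof.
by apply/setP=> x; rewrite inE invg1 mul1g eqxx andbb /=; case: (x \in U).
Qed.

Section GapP.
Hypothesis mpos : (0 < m)%N.
Hypothesis GP : forall A : {set gT}, A != set0 -> (2 * #|A| <= n)%N ->
   (200 * E * #|A| < #|dout S A| * m)%N.

Lemma GPk (A : {set gT}) k : A != set0 -> (2 * #|A| <= n)%N ->
   (#|dout S A| <= k * E)%N -> (200 * #|A| < k * m)%N.
Proof.
move=> A0 An hd; have := GP A0 An.
have : (#|dout S A| * m <= k * E * m)%N by rewrite leq_mul2r hd orbT.
move=> h1 h2; have h3 := leq_trans h2 h1.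
rewrite ltnNge; apply/negP=> h4.
have : (k * m * E <= 200 * #|A| * E)%N by rewrite leq_mul2r h4 orbT.
move: h3; rewrite -!mulnA (mulnC E #|A|) (mulnC E m); lia.
Qed.

Lemma big_m : (n < 2 * m)%N.
Proof.
rewrite ltnNge; apply/negP=> h.
have U0 : U != set0 by rewrite -card_gt0.
have := GPk (k := 1) U0 h; rewrite mul1n /E leq_addl => /(_ isT); lia.
Qed.

Lemma small_T g e : (2 * #|T g e| <= n)%N -> (100 * #|T g e| < m)%N.
Proof.
move=> h; case: (eqVneq (T g e) set0) => [->|T0]; first by rewrite cards0.
have := GPk (k := 2) T0 h (card_dout_T g e); lia.
Qed.

Lemma T_mul g h e e' : (n < 2 * #|T g e|)%N -> (n < 2 * #|T h e'|)%N ->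
   (n < 2 * #|T (g * h) (e == e')|)%N.
Proof.
move=> hg hh.
set D := T g e :&: ltr g (T h e').
have DT : D \subset T (g * h) (e == e').
  apply/subsetP=> x; rewrite !inE => /andP[/andP[/andP[xU gxU] ex]].
  move=> /andP[/andP[_ hgxU] ex'].
  rewrite invMg -mulgA xU hgxU /=.
  move: ex ex'; case: (x \in L); case: (g^-1 * x \in L); case: (h^-1 * (g^-1 * x) \in L);
    by case: (e); case: (e').
have dD : (#|dout S D| <= 4 * E)%N.
  apply: (leq_trans (subset_leq_card (dout_I _ _))).
  apply: (leq_trans (leq_card_setU _ _)).
  rewrite dout_ltr card_ltr.
  have := card_dout_T g e; have := card_dout_T h e'; lia.
have cD : (#|T g e| + #|T h e'| <= #|D| + m)%N.
  rewrite -(card_ltr g (T h e')) -cardsUI.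
  rewrite addnC leq_add2l /m -(card_ltr g U); apply: subset_leq_card.
  apply/subsetP=> x; rewrite in_setU => /orP[]; first by move/(subsetP (T_subgU g e)).
  by rewrite !ltrE => /(subsetP (T_subU h e')).
case: (leqP (2 * #|D|) n) => hD; last first.
  by apply: (leq_trans hD); rewrite leq_mul2l subset_leq_card.
have D0 : D != set0.
  rewrite -card_gt0; have := m_le_n; lia.
have := GPk (k := 4) D0 hD dD => hD2.
have sg : (100 * #|T g (~~ e)| < m)%N.
  apply: small_T; have := T_part g e; have : (#|U :&: ltr g U| <= n)%N by apply: max_card. lia.
have sh : (100 * #|T h (~~ e')| < m)%N.
  apply: small_T; have := T_part h e'; have : (#|U :&: ltr h U| <= n)%N by apply: max_card. lia.
have := T_part g e; have := T_part h e'; have := UgU g; have := UgU h.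
have := m_le_n; lia.
Qed.


Lemma card_sum (A : {set gT}) : #|A| = (\sum_(y : gT) (y \in A : nat))%N.
Proof.
by rewrite -sum1_card big_mkcond /=; apply: eq_bigr => y _; case: (y \in A).
Qed.

Lemma pair_count (bad : gT -> gT -> bool) :
  \sum_(x : gT) #|[set y | (x \in U) && (y \in U) && bad x y]| =
   \sum_(g : gT) #|[set x | (x \in U) && ((g^-1 * x)%g \in U) && bad x ((g^-1 * x)%g)]|.
Proof.
transitivity (\sum_(x : gT) \sum_(g : gT)
   ((x \in U) && ((g^-1 * x)%g \in U) && bad x ((g^-1 * x)%g) : nat)).
  apply: eq_bigr => x _; rewrite card_sum.
  rewrite (reindex_inj (h := fun g => (g^-1 * x)%g)) /=; last first.
    by move=> g1 g2 /mulIg /invg_inj.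
  by apply: eq_bigr => g _; rewrite inE.
rewrite exchange_big /=; apply: eq_bigr => g _.
by rewrite card_sum; apply: eq_bigr => x _; rewrite inE.
Qed.

Lemma avg (F : gT -> nat) c : (c * \sum_(x : gT) F x < m * m)%N ->
  exists2 x, x \in U & (c * F x < m)%N.
Proof.
move=> h.
case: (pickP (fun x => (x \in U) && (c * F x < m)%N)) => [x /andP[]|none].
  by move=> xU hx; exists x.
have : (m * m <= c * \sum_(x : gT) F x)%N.
  rewrite {1}/m -sum_nat_const big_distrr /=.
  rewrite [X in (_ <= X)%N](bigID (mem U)) /=.
  apply: leq_trans (leq_addr _ _).
  apply: leq_sum => x xU; move: (none x) => /=; rewrite xU /=.
  by rewrite ltnNge => /negbFE.
by rewrite leqNgt h.
Qed.

Lemma n_pos : (0 < n)%N.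
Proof. by rewrite /n; apply/card_gt0P; exists 1. Qed.

Lemma sum_lt (F : gT -> nat) c : (forall g, c * F g < m)%N ->
  (c * \sum_(g : gT) F g < n * m)%N.
Proof.
move=> h; rewrite big_distrr /=.
have : (\sum_(g : gT) (c * F g + 1) <= \sum_(g : gT) m)%N.
  by apply: leq_sum => g _; rewrite addn1; exact: h.
rewrite big_split /= !sum_nat_const.
rewrite (_ : #|xpredT| = n); last by apply: eq_card.
have := n_pos; lia.
Qed.

Section Main.
Hypothesis genS : <<S>> = [set: gT].
Hypothesis Esmall : (100 * E < m)%N.

Definition inH2 g := ((n < 2 * #|T g true|) || (n < 2 * #|T g false|))%N.
Definition H2 := [set g | inH2 g].

Lemma H2P g : reflect (exists e, n < 2 * #|T g e|)%N (g \in H2).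
Proof.
rewrite inE /inH2; apply: (iffP orP) => [[h|h]|[[] h]]; by [exists true | exists false | left | right].
Qed.

Lemma H2_group : group_set H2.
Proof.
apply/group_setP; split.
  by apply/H2P; exists true; rewrite T1 big_m.
move=> x y /H2P[e hx] /H2P[e' hy]; apply/H2P; exists (e == e').
exact: T_mul.
Qed.

Definition H2g := Group H2_group.

Lemma H2M x y : x \in H2 -> y \in H2 -> x * y \in H2.
Proof. exact: (@groupM _ H2g). Qed.

Lemma H2V x : x \in H2 -> x^-1 \in H2.
Proof. by move=> hx; rewrite (@groupV _ H2g). Qed.

Lemma dU_E : (#|dout S U| <= E)%N.
Proof. by rewrite /E leq_addl. Qed.

Lemma allH2 g : g \in H2.
Proof.
pose bad x y := (x * y^-1 \notin H2).
have hterm : forall g' : gT, (50 * #|[set x | (x \in U) && ((g'^-1 * x)%g \in U) &&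
                                   bad x (g'^-1 * x)%g]| < m)%N.
  move=> g'; rewrite /bad.
  have ex : forall x, x * (g'^-1 * x)^-1 = g'.
    by move=> x; rewrite invMg invgK mulKVg.
  under eq_finset => x do rewrite ex.
  case: (boolP (g' \in H2)) => hg.
    under eq_finset => x do rewrite andbF.
    by rewrite cards0.
  under eq_finset => x do rewrite andbT.
  have -> : [set x | (x \in U) && (g'^-1 * x \in U)] = U :&: ltr g' U.
    by apply/setP=> x; rewrite !inE.
  rewrite -(T_part g' true) /=.
  move: hg; rewrite inE /inH2 negb_or => /andP[h1 h2].
  have := small_T (g := g') (e := true); rewrite leqNgt h1 => /(_ isT).
  have := small_T (g := g') (e := false); rewrite leqNgt h2 => /(_ isT).
  rewrite /= => ha hb; lia.
have tot : (25 * \sum_(x : gT) #|[set y | (x \in U) && (y \in U) && bad x y]| < m * m)%N.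
  rewrite pair_count.
  have := sum_lt hterm.
  have : (n * m < 2 * m * m)%N by rewrite ltn_pmul2r // big_m.
  lia.
have [x0 x0U hx0] := avg tot.
set Bad := [set y | (x0 \in U) && (y \in U) && bad x0 y] in hx0.
have key : forall t, t \in S -> x0 * t^-1 * x0^-1 \in H2.
  move=> t tS; apply/negP => ht.
  set C := [set y | (y \in U) && (x0 * y^-1 \in H2)].
  have part : (#|C| + #|Bad| = m)%N.
    rewrite -cardsUI.
    have -> : C :&: Bad = set0.
      by apply/setP=> y; rewrite !inE /bad !inE; case: (y \in U); case: (inH2 (x0 * y^-1)); rewrite ?andbF.
    have -> : C :|: Bad = U.
      by apply/setP=> y; rewrite !inE /bad !inE x0U; case: (y \in U); case: (inH2 (x0 * y^-1)).
    by rewrite cards0 addn0.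
  have sub : C \subset rtr t (Bad :|: dout S U).
    apply/subsetP=> y; rewrite inE => /andP[yU hy]; rewrite rtrE in_setU.
    case ytU: (y * t \in U).
      apply/orP; left; rewrite inE x0U ytU /= /bad; apply/negP => h2.
      apply: ht; have := H2M h2 (H2V hy).
      by rewrite !invMg !invgK !mulgA mulgVK.
    apply/orP; right; apply/doutP; split; first by rewrite ytU.
    by exists t^-1; [rewrite -symS memV_invg | rewrite mulgK].
  have := subset_leq_card sub; rewrite card_rtr => h3.
  have h4 : (#|Bad :|: dout S U| <= #|Bad| + #|dout S U|)%N := leq_card_setU _ _.
  have := dU_E.
  lia.
have sS : S \subset H2 :^ x0.
  apply/subsetP => t tS; rewrite mem_conjg conjgE invgK.
  by have := H2V (key t tS); rewrite !invMg !invgK mulgA.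
have : <<S>> \subset (H2g :^ x0)%G by rewrite gen_subG.
rewrite genS => hT.
have hc := subset_leq_card hT; rewrite cardJg cardsT in hc.
have -> : H2 = [set: gT] by apply/eqP; rewrite eqEcard subsetT cardsT hc.
by rewrite inE.
Qed.


Definition cc g := (n < 2 * #|T g true|)%N.

Lemma notboth g : ~~ ((n < 2 * #|T g true|) && (n < 2 * #|T g false|))%N.
Proof.
have := T_part g true; have : (#|U :&: ltr g U| <= n)%N by apply: max_card.
rewrite /=; lia.
Qed.

Lemma ccE g e : (n < 2 * #|T g e|)%N -> cc g = e.
Proof.
case: e => // h; apply/negbTE; apply/negP => h'.
by move: h'; rewrite /cc => h'; have := notboth g; rewrite h' h.
Qed.

Lemma ccM g h : cc (g * h) = (cc g == cc h).
Proof.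
have /H2P[e he] := allH2 g; have /H2P[e' he'] := allH2 h.
by rewrite (ccE (T_mul he he')) (ccE he) (ccE he').
Qed.

Lemma cc1 : cc 1 = true.
Proof. by rewrite /cc T1 big_m. Qed.

Lemma ccV g : cc g^-1 = cc g.
Proof.
have := ccM g g^-1; rewrite mulgV cc1.
by case: (cc g); case: (cc g^-1).
Qed.

Lemma ccS t : t \in S -> cc t = false.
Proof.
pose bad x y := ((x \in L) == (y \in L)) != cc (x * y^-1).
have hterm : forall g' : gT, (100 * #|[set x | (x \in U) && ((g'^-1 * x)%g \in U) &&
                                   bad x (g'^-1 * x)%g]| < m)%N.
  move=> g'; rewrite /bad.
  have ex : forall x, x * (g'^-1 * x)^-1 = g'.
    by move=> x; rewrite invMg invgK mulKVg.
  under eq_finset => x do rewrite ex.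
  have -> : [set x | (x \in U) && (g'^-1 * x \in U) &&
        (((x \in L) == (g'^-1 * x \in L)) != cc g')] = T g' (~~ cc g').
    apply/setP=> x; rewrite !inE.
    by case: ((x \in L) == (g'^-1 * x \in L)); case: (cc g').
  apply: small_T.
  case hc: (cc g') => /=.
    have := T_part g' true; have : (#|U :&: ltr g' U| <= n)%N by apply: max_card.
    move: hc; rewrite /cc /= => hc; lia.
  by rewrite leqNgt; move: hc; rewrite /cc => ->.
have tot : (50 * \sum_(x : gT) #|[set y | (x \in U) && (y \in U) && bad x y]| < m * m)%N.
  rewrite pair_count.
  have := sum_lt hterm.
  have : (n * m < 2 * m * m)%N by rewrite ltn_pmul2r // big_m.
  lia.
have [x0 x0U hx0] := avg tot.
set Bad := [set y | (x0 \in U) && (y \in U) && bad x0 y] in hx0.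
move=> tS; apply/negbTE/negP => ct.
have ctV : cc t^-1 = true by rewrite ccV.
have cov : U \subset Bad :|: IL :|: IR :|: rtr t (dout S U) :|: rtr t Bad.
  apply/subsetP=> y yU; rewrite !in_setU !rtrE.
  case yB: (y \in Bad) => //=.
  case yIL: (y \in IL) => //=.
  case yIR: (y \in IR) => //=.
  case ytU: (y * t \in U); last first.
    apply/orP; left; apply/doutP; split; first by rewrite ytU.
    by exists t^-1; [rewrite -symS memV_invg | rewrite mulgK].
  apply/orP; right.
  have eyt : (y * t \in L) = ~~ (y \in L).
    case yL: (y \in L).
      apply/negP => ytL; move/negP: yIL; apply; exact: ILI yL tS ytL.
    have yR := UnL yU (negbT yL).
    suff -> : y * t \in L by [].
    apply/negPn/negP => ytnL; move/negP: yIR; apply.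
    by apply: (ILI yR tS); apply: UnL.
  move: yB; rewrite !inE x0U yU ytU /bad /= => /negbFE /eqP yB.
  rewrite eyt invMg mulgA ccM ccM ctV.
  have := ccM x0 y^-1; rewrite -yB.
  by case: (x0 \in L); case: (y \in L); case: (cc x0); case: (cc y^-1).
have := subset_leq_card cov.
have h1 := leq_card_setU (Bad :|: IL :|: IR :|: rtr t (dout S U)) (rtr t Bad).
have h2 := leq_card_setU (Bad :|: IL :|: IR) (rtr t (dout S U)).
have h3 := leq_card_setU (Bad :|: IL) IR.
have h4 := leq_card_setU Bad IL.
rewrite !card_rtr in h1 h2.
have : (#|Bad :|: IL :|: IR :|: rtr t (dout S U) :|: rtr t Bad| <= #|Bad :|: IL :|: IR :|: rtr t (dout S U)| + #|Bad|)%N := h1.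
have : (#|Bad :|: IL :|: IR :|: rtr t (dout S U)| <= #|Bad :|: IL :|: IR| + #|dout S U|)%N := h2.
have : (#|Bad :|: IL :|: IR| <= #|Bad :|: IL| + #|IR|)%N := h3.
have : (#|Bad :|: IL| <= #|Bad| + #|IL|)%N := h4.
have := Esmall; rewrite /E; lia.
Qed.

Hypothesis nbip : ~ cayley_bipartite S.

Lemma core_contra : False.
Proof.
apply: nbip; exists cc => x s sS.
by rewrite ccM (ccS sS); case: (cc x).
Qed.

End Main.


Lemma bigE_contra : (m <= 100 * E)%N -> (200 * E < n * m)%N -> False.
Proof.
move=> hE hn.
have n3 : (2 < n)%N.
  have : (2 * m < n * m)%N by lia.
  by rewrite ltn_pmul2r.
set k := (n %/ 2)%N.
set A := [set x in take k (enum gT)].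
have cA : #|A| = k.
  rewrite cardsE; move/card_uniqP: (take_uniq k (enum_uniq gT)) ->.
  rewrite size_take -cardE -/n.
  case: ifP => //; lia.
have A0 : A != set0 by rewrite -card_gt0 cA; lia.
have An : (2 * #|A| <= n)%N by rewrite cA; lia.
have := GP A0 An; rewrite cA => h.
have hd : (#|dout S A| <= n - k)%N.
  apply: (leq_trans (subset_leq_card (dout_subC A))).
  have := cardsC A; rewrite cA -/n; lia.
have h2 : (2 * m * k <= 200 * E * k)%N.
  by rewrite leq_mul2r; apply/orP; right; lia.
have h3 : (#|dout S A| * m <= (n - k) * m)%N by rewrite leq_mul2r hd orbT.
have : ((2 * k) * m < (n - k) * m)%N.
  rewrite mulnAC; apply: leq_ltn_trans h2 _; apply: leq_trans h3; exact: h.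
rewrite ltn_pmul2r //; lia.
Qed.

End GapP.

End Core.

Local Open Scope ring_scope.

Lemma pair_bound (gT : finGroupType) (S L R : {set gT}) :
  <<S>>%g = [set: gT] -> (S^-1)%g = S -> ~ cayley_bipartite S ->
  [disjoint L & R] -> L :|: R != set0 ->
  h_out S <= 200%:R * b_out S L R.
Proof.
move=> genS symS nbip dLR U0.
set E := (Iin S L + Iin S R + #|dout S (L :|: R)|)%N.
set m := #|L :|: R|.
have mpos : (0 < m)%N by rewrite card_gt0.
have mR : (0 : rat) < m%:R by rewrite ltr0n.
rewrite leNgt; apply/negP => hlt.
have hb : b_out S L R = E%:R / m%:R by [].
rewrite hb mulrA in hlt.
have hn : (200 * E < #|gT| * m)%N.
  have h : h_out S <= #|gT|%:R by apply: bigmin_le_id.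
  have := lt_le_trans hlt h.
  rewrite (ltr_pdivrMr _ _ mR) -!natrM ltr_nat; exact.
have GP : forall A : {set gT}, A != set0 -> (2 * #|A| <= #|gT|)%N ->
    (200 * E * #|A| < #|dout S A| * m)%N.
  move=> A A0 An.
  have aR : (0:rat) < #|A|%:R by rewrite ltr0n card_gt0.
  have h : h_out S <= #|dout S A|%:R / #|A|%:R.
    apply: bigmin_le_cond. apply/andP; split. exact: A0. exact: An.
  have := lt_le_trans hlt h.
  rewrite (ltr_pdivlMr _ _ aR) mulrAC (ltr_pdivrMr _ _ mR) => H.
  rewrite -(ltr_nat rat) !natrM.
  exact H.
case: (leqP m (100 * E)) => hE.
  exact: (bigE_contra dLR mpos GP hE hn).

exact: (core_contra (U := L :|: R) erefl symS dLR mpos GP genS hE nbip).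
Qed.

Theorem theorem3 (gT : finGroupType) (S : {set gT}) :
  (<<S>> = [set: gT])%g ->
  (S^-1)%g = S ->
  ~ cayley_bipartite S ->
  h_out S <= 200%:R * beta_out S.
Proof.
move=> genS symS nbip.
have p200 : (0 : rat) < 200%:R by rewrite ltr0n.
rewrite -(ler_pdivrMl _ _ p200).
apply: le_bigmin.
  rewrite (ler_pdivrMl _ _ p200).
  apply: (le_trans (bigmin_le_id _ _ _ _)).
  rewrite -natrM ler_nat; apply: leq_pmull; exact: isT.
case=> L R /= /andP[dLR U0]; rewrite (ler_pdivrMl _ _ p200).
exact: pair_bound.
Qed.
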